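(* Let $k$ be a field, $A,B$ abelian groups, $R$ an $A$-graded and $S$ a $B$-graded finite-dimensional Frobenius $k$-algebra with forms $\langle-,-\rangle_R,\langle-,-\rangle_S$ and Nakayama automorphisms $\nu_R,\nu_S$, and $t:A\otimes B\to k^\times$ a bicharacter. Suppose there exist $\sigma_R\in A$, $\sigma_S\in B$ such that for homogeneous $r,r'\in R$, $\langle r,r'\rangle_R\neq0$ implies $|r|+|r'|+\sigma_R=0$, and for homogeneous $s,s'\in S$, $\langle s,s'\rangle_S\ne0$ implies $|s|+|s'|+\sigma_S=0$. Let $\nu$ be the Nakayama automorphism of $R\otimes^tS$ with respect to the form $\langle r\otimes s,r'\otimes s'\rangle=t(|r'|,|s|)\langle r,r'\rangle_R\langle s,s'\rangle_S$. Then for homogeneous $a\in R$, $b\in S$, $$\nu(a\otimes b)=t(|a|,\sigma_S)\,t(\sigma_R,|b|)^{-1}\,\nu_R(a)\otimes\nu_S(b).$$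
   Context: $R\otimes^tS$ is $R\otimes S$ with product $(r\otimes s)(r'\otimes s')=t(|r'|,|s|)rr'\otimes ss'$; $|\cdot|$ denotes degree. The Nakayama automorphism $\nu$ of a Frobenius algebra with form $\langle-,-\rangle$ is defined by $\langle x,y\rangle=\langle y,\nu(x)\rangle$ for all $y$. *)

(* Defs.v *)
From HB Require Import structures.
From mathcomp Require Import all_boot all_order all_algebra.
From mathcomp Require Import falgebra.
Set Implicit Arguments. Unset Strict Implicit. Unset Printing Implicit Defensive.
Import GRing.Theory.
Local Open Scope ring_scope.

Definition bilinear_form (k : fieldType) (V : lmodType k) (f : V -> V -> k) :=
  (forall c x x' y, f (c *: x + x') y = c * f x y + f x' y) /\
  (forall c x y y', f x (c *: y + y') = c * f x y + f x y').

Definition frobenius_form (k : fieldType) (R : falgType k) (f : R -> R -> k) :=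
  [/\ bilinear_form f,
      (forall x y z, f (x * y) z = f x (y * z)) &
      (forall x, (forall y, f x y = 0) -> x = 0)].

Definition nakayama (V : Type) (k : Type) (f : V -> V -> k) (nu : V -> V) :=
  forall x y, f x y = f y (nu x).

(* An A-grading of the k-algebra R, given by the homogeneous components
   Rg a (a in A): R is the (internal) direct sum of the Rg a, and the
   grading is multiplicative. *)
Definition graded (k : fieldType) (A : zmodType) (R : falgType k)
    (Rg : A -> {vspace R}) :=
  [/\ (forall r : R, exists s : seq A, r \in (\sum_(a <- s) Rg a)%VS),
      (forall (s : seq A) (f : A -> R), uniq s -> (forall a, f a \in Rg a) ->
          \sum_(a <- s) f a = 0 -> forall a, a \in s -> f a = 0),
      (1 \in Rg 0) &
      (forall a b x y, x \in Rg a -> y \in Rg b -> x * y \in Rg (a + b))].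

(* A bicharacter A x B -> k^x (equivalently a homomorphism A (x) B -> k^x). *)
Definition bicharacter (k : fieldType) (A B : zmodType) (t : A -> B -> k) :=
  [/\ (forall a b, t a b != 0),
      (forall a a' b, t (a + a') b = t a b * t a' b) &
      (forall a b b', t a (b + b') = t a b * t a b')].

(* Concrete model of the underlying vector space of R (x) S: matrices of
   size dim R x dim S, with r (x) s the outer product of the coordinate
   vectors of r and s in the canonical bases vbasis {:R}, vbasis {:S}. *)
Definition tens_space (k : fieldType) (R S : falgType k) :=
  'M[k]_(\dim {:R}, \dim {:S}).

Definition tens (k : fieldType) (R S : falgType k) (r : R) (s : S)
  : tens_space R S := (passmx.rVof (vbasis {:R}) r)^T *m (passmx.rVof (vbasis {:S}) s).

(* Main.v *)
Require Import Defs.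
From HB Require Import structures.
From mathcomp Require Import all_boot all_order all_algebra.
From mathcomp Require Import falgebra.
From mathcomp Require Import ring.
Import GRing.Theory.
Local Open Scope ring_scope.

Section Lin.
Variables (k : fieldType) (V : lmodType k).
Definition lin (g : V -> k) := forall c x x', g (c *: x + x') = c * g x + g x'.
Variables (g : V -> k) (Hg : lin g).
Lemma lin0 : g 0 = 0.
Proof.
have H := Hg 1 0 0; rewrite scaler0 addr0 mul1r in H.
by apply: (addrI (g 0)); rewrite addr0 -H.
Qed.
Lemma linD x y : g (x + y) = g x + g y.
Proof. by have := Hg 1 x y; rewrite scale1r mul1r. Qed.
Lemma linZ c x : g (c *: x) = c * g x.
Proof. by have := Hg c x 0; rewrite addr0 lin0 addr0. Qed.
Lemma linB x y : g (x - y) = g x - g y.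
Proof. by rewrite -scaleN1r linD linZ mulN1r. Qed.
Lemma lin_sum (I : Type) (r : seq I) (P : pred I) (F : I -> V) :
  g (\sum_(i <- r | P i) F i) = \sum_(i <- r | P i) g (F i).
Proof.
by elim/big_rec2: _ => [|i y1 y2 _ <-]; rewrite ?lin0 // linD.
Qed.
End Lin.
Arguments lin {k V}.
Arguments lin0 {k V g}.
Arguments linD {k V g}.
Arguments linZ {k V g}.
Arguments linB {k V g}.
Arguments lin_sum {k V g}.

Lemma bil_l (k : fieldType) (V : lmodType k) (f : V -> V -> k) :
  bilinear_form f -> forall y, lin (fun x => f x y).
Proof. by case=> H1 H2 y c x x'; apply: H1. Qed.
Lemma bil_r (k : fieldType) (V : lmodType k) (f : V -> V -> k) :
  bilinear_form f -> forall x, lin (f x).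
Proof. by case=> H1 H2 x c y y'; apply: H2. Qed.

Arguments bil_l {k V f}.
Arguments bil_r {k V f}.

Section Generic.
Variables (k : fieldType) (V : vectType k) (f : V -> V -> k).
Hypothesis (Hb : bilinear_form f) (Hn : forall x, (forall y, f x y = 0) -> x = 0).
Local Notation n := (\dim {: V}).
Local Notation e := (vbasis {: V}).

Lemma right_nondeg z : (forall y, f y z = 0) -> z = 0.
Proof.
move=> Hz.
have eB := vbasisP (fullv : {vspace V}).
pose M : 'M[k]_n := \matrix_(i, j) f e`_i e`_j.
have vecE : forall u : 'rV[k]_n, passmx.vecof e u = \sum_i u 0 i *: e`_i by [].
have fM : row_free M.
  apply: inj_row_free => u Hu.
  have Hx : passmx.vecof e u = 0.
    apply: Hn => y.
    rewrite -(passmx.rVofK eB y) [passmx.vecof e (passmx.rVof e y)]vecE.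
    rewrite (lin_sum (bil_r Hb _)); apply: big1 => j _.
    rewrite (linZ (bil_r Hb _)) vecE (lin_sum (bil_l Hb _)).
    have := congr1 (fun m : 'M[k]_(1, n) => m 0 j) Hu; rewrite !mxE => Hj.
    suff -> : \sum_i f (u 0 i *: e`_i) e`_j = \sum_j0 u 0 j0 * M j0 j by rewrite Hj mulr0.
    apply eq_bigr => i _.
    by rewrite (linZ (bil_l Hb _)) mxE.
  by apply/eqP; rewrite -(passmx.vecof_eq0 eB) Hx.
have fMt : row_free M^T by rewrite /row_free mxrank_tr.
set v := passmx.rVof e z.
have H0 : v *m M^T = 0.
  rewrite -[v]trmxK -trmx_mul; apply/matrixP => i j; rewrite !mxE.
  transitivity (f e`_j (passmx.vecof e v)); last by rewrite /v passmx.rVofK.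
  rewrite vecE (lin_sum (bil_r Hb _)).
  apply eq_bigr => l _; rewrite (linZ (bil_r Hb _)) !mxE mulrC.
  by [].
apply/eqP; rewrite -(passmx.rVof_eq0 eB) -/v -(mulmx_free_eq0 _ fMt).
by rewrite H0.
Qed.
End Generic.

Arguments right_nondeg {k V f}.

Lemma gspan (k : fieldType) (A : zmodType) (R : falgType k) (Rg : A -> {vspace R})
  (gR : graded Rg) (P : R -> Prop) :
  P 0 -> (forall c x y, P x -> P y -> P (c *: x + y)) ->
  (forall a x, x \in Rg a -> P x) -> forall x, P x.
Proof.
case: gR => Hsp _ _ _ P0 PC PH x.
case: (Hsp x) => s; elim: s x => [|a s IH] x.
  by rewrite big_nil memv0 => /eqP ->.
rewrite big_cons => /memv_addP [u Hu [v Hv ->]].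
by rewrite -[u]scale1r; apply: PC; [apply: PH Hu | apply: IH].
Qed.

Lemma zmod_solve (A : zmodType) (a a' s : A) : a + a' + s = 0 -> a' = - a - s.
Proof.
move=> H; apply: (addrI a); apply: (addIr s); rewrite H.
by rewrite addrA subrr add0r addNr.
Qed.

Arguments zmod_solve {A a a' s}.

Section Bichar.
Variables (k : fieldType) (A B : zmodType) (t : A -> B -> k).
Hypothesis bic : bicharacter t.
Lemma t0l b : t 0 b = 1.
Proof.
case: bic => nz tl tr; have := tl 0 0 b; rewrite addr0 => H.
by apply: (mulfI (nz 0 b)); rewrite -H mulr1.
Qed.
Lemma t0r a : t a 0 = 1.
Proof.
case: bic => nz tl tr; have := tr a 0 0; rewrite addr0 => H.
by apply: (mulfI (nz a 0)); rewrite -H mulr1.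
Qed.
Lemma tNl a b : t (- a) b = (t a b)^-1.
Proof.
case: bic => nz tl tr; have := tl a (- a) b; rewrite subrr t0l => H.
by apply: (mulfI (nz a b)); rewrite -H mulfV.
Qed.
Lemma tNr a b : t a (- b) = (t a b)^-1.
Proof.
case: bic => nz tl tr; have := tr a b (- b); rewrite subrr t0r => H.
by apply: (mulfI (nz a b)); rewrite -H mulfV.
Qed.
Lemma tkey a a' b b' sR sS : a + a' + sR = 0 -> b + b' + sS = 0 ->
  t a' b = t a sS / t sR b * t (- a' - sR) b'.
Proof.
move=> /zmod_solve -> /zmod_solve ->.
have -> : - (- a - sR) - sR = a by rewrite opprB opprK addrC addrA addNr add0r.
case: bic => nz tl tr.
rewrite tl tr !tNl !tNr.
have := nz a sS; have := nz sR b; have := nz a b.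
move=> h1 h2 h3.
field.
by rewrite h1 h2 h3.
Qed.
End Bichar.
Arguments tkey {k A B t}.

Section Main.
Variables (k : fieldType) (A B : zmodType) (R S : falgType k)
  (Rg : A -> {vspace R}) (Sg : B -> {vspace S}) (fR : R -> R -> k) (fS : S -> S -> k).
Hypotheses (gR : graded Rg) (gS : graded Sg) (FR : frobenius_form fR) (FS : frobenius_form fS).
Local Notation eR := (vbasis {: R}).
Local Notation eS := (vbasis {: S}).
Local Notation nR := (\dim {: R}).
Local Notation nS := (\dim {: S}).

Lemma tensE (r : R) (s : S) i j :
  tens r s i j = passmx.rVof eR r 0 i * passmx.rVof eS s 0 j.
Proof. by rewrite /tens mxE big_ord1 mxE. Qed.

Lemma tensDl c (r r' : R) (s : S) : tens (c *: r + r') s = c *: tens r s + tens r' s.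
Proof.
by apply/matrixP => i j; rewrite !(tensE, mxE) linearP /= mulrDl mulrA.
Qed.
Lemma tensDr c (r : R) (s s' : S) : tens r (c *: s + s') = c *: tens r s + tens r s'.
Proof.
by apply/matrixP => i j; rewrite !(tensE, mxE) linearP /= mulrDr mulrCA.
Qed.
Lemma tens0l (s : S) : tens (0 : R) s = 0.
Proof. by apply/matrixP => i j; rewrite !(tensE, mxE) linear0 mul0r. Qed.
Lemma tens0r (r : R) : tens r (0 : S) = 0.
Proof. by apply/matrixP => i j; rewrite !(tensE, mxE) linear0 mulr0. Qed.

Lemma tspan (P : tens_space R S -> Prop) :
  P 0 -> (forall c X Y, P X -> P Y -> P (c *: X + Y)) ->
  (forall a b r s, r \in Rg a -> s \in Sg b -> P (tens r s)) -> forall Z, P Z.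
Proof.
move=> P0 PC PH.
have Pt : forall r s, P (tens r s).
  move=> r s; move: r; apply: (@gspan _ _ _ _ gR (fun r => P (tens r s))).
  - by rewrite tens0l.
  - by move=> c x y Hx Hy; rewrite tensDl; apply: PC.
  move=> a x Hx; move: s; apply: (@gspan _ _ _ _ gS (fun s => P (tens x s))).
  - by rewrite tens0r.
  - by move=> c y y' Hy Hy'; rewrite tensDr; apply: PC.
  by move=> b y Hy; apply: PH Hx Hy.
have PD : forall X Y, P X -> P Y -> P (X + Y).
  by move=> X Y HX HY; rewrite -[X]scale1r; apply: PC.
have PZ : forall c X, P X -> P (c *: X).
  by move=> c X HX; rewrite -[_ *: X]addr0; apply: PC.
move=> Z; rewrite [Z]matrix_sum_delta.
apply: (big_ind P) => // i _; apply: (big_ind P) => // j _.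
apply: PZ.
have eRB := vbasisP (fullv : {vspace R}).
have eSB := vbasisP (fullv : {vspace S}).
have -> : delta_mx i j = tens eR`_i eS`_j.
  by rewrite /tens !passmx.rVofE // trmx_delta mul_delta_mx.
exact: Pt.
Qed.

Definition G (Z : tens_space R S) (r : R) (s : S) :=
  \sum_i \sum_j Z i j * fR r eR`_i * fS s eS`_j.

Lemma expand_r (f : R -> R -> k) (Hb : bilinear_form f) r u :
  f r u = \sum_i passmx.rVof eR u 0 i * f r eR`_i.
Proof.
have eRB := vbasisP (fullv : {vspace R}).
rewrite -{1}(passmx.rVofK eRB u) /passmx.vecof (lin_sum (bil_r Hb _)).
by apply eq_bigr => i _; rewrite (linZ (bil_r Hb _)).
Qed.
Lemma expand_s (f : S -> S -> k) (Hb : bilinear_form f) r u :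
  f r u = \sum_i passmx.rVof eS u 0 i * f r eS`_i.
Proof.
have eRB := vbasisP (fullv : {vspace S}).
rewrite -{1}(passmx.rVofK eRB u) /passmx.vecof (lin_sum (bil_r Hb _)).
by apply eq_bigr => i _; rewrite (linZ (bil_r Hb _)).
Qed.

Lemma Gtens u v r s : G (tens u v) r s = fR r u * fS s v.
Proof.
case: FR => bR _ _; case: FS => bS _ _.
rewrite (expand_r _ bR) (expand_s _ bS) big_distrl /G.
apply eq_bigr => i _; rewrite big_distrr; apply eq_bigr => j _ /=.
by rewrite tensE; ring.
Qed.

Lemma Glin r s : lin (fun Z => G Z r s).
Proof.
move=> c X Y; rewrite /G mulr_sumr -big_split; apply eq_bigr => i _.
rewrite mulr_sumr -big_split; apply eq_bigr => j _.
by rewrite /= !mxE; ring.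
Qed.
Lemma Glinr Z s : lin (fun r => G Z r s).
Proof.
case: FR => [[bl br] _ _].
move=> c X Y; rewrite /G mulr_sumr -big_split; apply eq_bigr => i _.
rewrite mulr_sumr -big_split; apply eq_bigr => j _.
rewrite /= (bl c X Y); ring.
Qed.
Lemma Glins Z r : lin (fun s => G Z r s).
Proof.
case: FS => [[bl br] _ _].
move=> c X Y; rewrite /G mulr_sumr -big_split; apply eq_bigr => i _.
rewrite mulr_sumr -big_split; apply eq_bigr => j _.
rewrite /= (bl c X Y); ring.
Qed.

Lemma G_nondeg Z : (forall r s, G Z r s = 0) -> Z = 0.
Proof.
move=> HZ.
case: FR => bR _ nR'; case: FS => bS _ nS'.
have eRB := vbasisP (fullv : {vspace R}).
have eSB := vbasisP (fullv : {vspace S}).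
have rnR := right_nondeg bR nR'; have rnS := right_nondeg bS nS'.
apply/matrixP => i j; rewrite mxE.
have Hrow : forall s, fS s (passmx.vecof eS (row i Z)) = 0.
  move=> s.
  pose w := \row_(i0 < nR) fS s (passmx.vecof eS (row i0 Z)).
  suff : w = 0 by move/matrixP => /(_ 0 i); rewrite !mxE.
  apply/eqP; rewrite -(passmx.vecof_eq0 eRB); apply/eqP; apply: rnR => r.
  rewrite -(HZ r s) /G /passmx.vecof (lin_sum (bil_r bR _)).
  apply eq_bigr => i0 _; rewrite (linZ (bil_r bR _)) mxE.
  rewrite (lin_sum (bil_r bS _)) big_distrl; apply eq_bigr => j0 _ /=.
  by rewrite (linZ (bil_r bS _)) mxE; ring.
have := rnS _ Hrow => /eqP; rewrite (passmx.vecof_eq0 eSB) => /eqP.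
by move/matrixP => /(_ 0 j); rewrite !mxE.
Qed.

Section Main2.
Variables (t : A -> B -> k) (sigR : A) (sigS : B)
  (form : tens_space R S -> tens_space R S -> k).
Hypotheses (bic : bicharacter t)
  (degR : forall a a' (r r' : R), r \in Rg a -> r' \in Rg a' -> fR r r' != 0 ->
      a + a' + sigR = 0)
  (degS : forall b b' (s s' : S), s \in Sg b -> s' \in Sg b' -> fS s s' != 0 ->
      b + b' + sigS = 0)
  (bF : bilinear_form form)
  (formE : forall a a' b b' (r r' : R) (s s' : S),
      r \in Rg a -> r' \in Rg a' -> s \in Sg b -> s' \in Sg b' ->
      form (tens r s) (tens r' s') = t a' b * fR r r' * fS s s').

Lemma formG a' b' r' s' : r' \in Rg a' -> s' \in Sg b' ->
  forall Z, form (tens r' s') Z = t (- a' - sigR) b' * G Z r' s'.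
Proof.
move=> Hr' Hs'; apply: tspan.
- by rewrite (lin0 (bil_r bF _)) (lin0 (Glin _ _)) mulr0.
- move=> c X Y HX HY; rewrite (bil_r bF _) (Glin _ _) HX HY; ring.
move=> c d r s Hr Hs; rewrite (formE _ _ _ _ _ _ _ _ Hr' Hr Hs' Hs) Gtens.
have [->|nz1] := eqVneq (fR r' r) 0; first by rewrite !(mulr0, mul0r).
by rewrite (zmod_solve (degR _ _ _ _ Hr' Hr nz1)) mulrA.
Qed.

Lemma form_rnd Z : (forall W, form W Z = 0) -> Z = 0.
Proof.
move=> HZ; apply: G_nondeg.
have Hh : forall a b r s, r \in Rg a -> s \in Sg b -> G Z r s = 0.
  move=> a b r s Hr Hs; have := HZ (tens r s); rewrite (formG _ _ _ _ Hr Hs) => /eqP.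
  case: bic => nz _ _; rewrite mulf_eq0 (negPf (nz _ _)) /= => /eqP //.
move=> r s; move: r; apply: (@gspan _ _ _ _ gR (fun r => G Z r s = 0)).
- exact: (lin0 (Glinr _ _)).
- by move=> c x y Hx Hy; rewrite (Glinr _ _) Hx Hy mulr0 addr0.
move=> a x Hx; move: s; apply: (@gspan _ _ _ _ gS (fun s => G Z x s = 0)).
- exact: (lin0 (Glins _ _)).
- by move=> c y y' Hy Hy'; rewrite (Glins _ _) Hy Hy' mulr0 addr0.
by move=> b y Hy; apply: Hh Hx Hy.
Qed.

Variables (nuR : R -> R) (nuS : S -> S) (nu : tens_space R S -> tens_space R S).
Hypotheses (nkR : nakayama fR nuR) (nkS : nakayama fS nuS) (nk : nakayama form nu).

Lemma main_aux a b x y : x \in Rg a -> y \in Sg b ->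
  nu (tens x y) = (t a sigS / t sigR b) *: tens (nuR x) (nuS y).
Proof.
move=> Hx Hy.
set c := t a sigS / t sigR b.
set Y := c *: tens (nuR x) (nuS y).
have key : forall W, form (tens x y) W = form W Y.
  apply: tspan.
  - by rewrite (lin0 (bil_r bF _)) (lin0 (bil_l bF _)).
  - by move=> d X1 X2 H1 H2; rewrite (bil_r bF _) (bil_l bF _) H1 H2.
  move=> a' b' r' s' Hr' Hs'.
  rewrite /Y (linZ (bil_r bF _)) (formG _ _ _ _ Hr' Hs') Gtens -nkR -nkS.
  rewrite (formE _ _ _ _ _ _ _ _ Hx Hr' Hy Hs').
  have [->|n1] := eqVneq (fR x r') 0; first by rewrite !(mulr0, mul0r).
  have [->|n2] := eqVneq (fS y s') 0; first by rewrite !(mulr0, mul0r).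
  rewrite (tkey bic _ _ _ _ _ _ (degR _ _ _ _ Hx Hr' n1) (degS _ _ _ _ Hy Hs' n2)) /c; ring.
apply/eqP; rewrite -subr_eq0; apply/eqP; apply: form_rnd => W.
by rewrite (linB (bil_r bF _)) -nk key subrr.
Qed.

End Main2.
End Main.

Theorem mainTheorem6
  (k : fieldType) (A B : zmodType)
  (R S : falgType k) (Rg : A -> {vspace R}) (Sg : B -> {vspace S})
  (fR : R -> R -> k) (fS : S -> S -> k) (nuR : R -> R) (nuS : S -> S)
  (t : A -> B -> k) (sigR : A) (sigS : B)
  (form : tens_space R S -> tens_space R S -> k)
  (nu : tens_space R S -> tens_space R S) :
  graded Rg -> graded Sg ->
  frobenius_form fR -> frobenius_form fS ->
  nakayama fR nuR -> nakayama fS nuS ->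
  bicharacter t ->
  (forall a a' (r r' : R), r \in Rg a -> r' \in Rg a' -> fR r r' != 0 ->
      a + a' + sigR = 0) ->
  (forall b b' (s s' : S), s \in Sg b -> s' \in Sg b' -> fS s s' != 0 ->
      b + b' + sigS = 0) ->
  bilinear_form form ->
  (forall a a' b b' (r r' : R) (s s' : S),
      r \in Rg a -> r' \in Rg a' -> s \in Sg b -> s' \in Sg b' ->
      form (tens r s) (tens r' s') = t a' b * fR r r' * fS s s') ->
  nakayama form nu ->
  forall (a : A) (b : B) (x : R) (y : S), x \in Rg a -> y \in Sg b ->
    nu (tens x y) = (t a sigS / t sigR b) *: tens (nuR x) (nuS y).
Proof.
move=> gR gS FR FS nkR nkS bic degR degS bF formE nk a b x y Hx Hy.
exact: (@main_aux _ _ _ _ _ _ _ _ _ gR gS FR FS _ _ _ _ bic degR degS bF formE _ _ _ nkR nkS nk _ _ _ _ Hx Hy).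
Qed.
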